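(* Assume $\sup_n\|D_n\|<\infty$. Let $z=x+iy$ with $x\in\mathbb{R}$, $y>0$, let $(F_n(z))_{n\ge0}$ be the Jost solution at $z$, and let $\phi_n=\phi_n(x)$, $\psi_n=\psi_n(x)$ be the Dirichlet and Neumann solutions at the real energy $x$. Then for every $n\ge1$, $$F_n(z)=\psi_n-\phi_nM^\phi_+(z)D_0-iy\,\psi_n\sum_{k=1}^nD_0^{-1}\phi_k^{t}F_k(z)+iy\,\phi_n\sum_{k=1}^nD_0^{-1}\psi_k^{t}F_k(z),$$ and $F_0(z)=\mathbb{I}$.
   Context: Fix $l\in\mathbb{N}$. Let $(D_n)_{n\in\mathbb{Z}}$, $(V_n)_{n\in\mathbb{Z}}$ be sequences of real symmetric $l\times l$ matrices with every $D_n$ invertible. For $z\in\mathbb{C}$ the eigenvalue equation is $D_{n-1}\mathbf{u}_{n-1}+D_n\mathbf{u}_{n+1}+V_n\mathbf{u}_n=z\mathbf{u}_n$; a sequence of $l\times l$ matrices is a (matrix) solution if each column is a solution. The Dirichlet solution $\phi(z)$ and Neumann solution $\psi(z)$ are the matrix solutions for $n\ge1$ with $\phi_0=0,\ \phi_1=\mathbb{I}$ and $\psi_0=\mathbb{I},\ \psi_1=0$. Jost solution and Weyl function: when $\sup_n\|D_n\|<\infty$, for each $z\in\mathbb{C}\setminus\mathbb{R}$ there is a unique sequence $(F_n(z))_{n\ge0}$ of $l\times l$ matrices with $D_nF_{n+1}+D_{n-1}F_{n-1}+V_nF_n=zF_n$ for all $n\ge1$, $F_0=\mathbb{I}$, and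 $\sum_{n\ge0}\|F_n(z)\|^2<\infty$; the matrix Weyl–Titchmarsh function is $M^\phi_+(z):=-F_1(z)D_0^{-1}$. $A^t$ denotes the transpose. *)

(* Defs.v *)
From mathcomp Require Import all_boot all_order all_algebra.
From mathcomp Require Export complex.
Set Implicit Arguments. Unset Strict Implicit. Unset Printing Implicit Defensive.
Import Order.TTheory GRing.Theory Num.Theory.
Local Open Scope ring_scope.

Definition cmx (R : rcfType) (l : nat) (A : 'M[R]_l) : 'M[R[i]]_l :=
  map_mx (fun r => r%:C%C) A.

Definition frob2 (R : rcfType) (l : nat) (A : 'M[R[i]]_l) : R :=
  \sum_(i < l) \sum_(j < l) (complex.Re (A i j) ^+ 2 + complex.Im (A i j) ^+ 2).

Definition is_mx_solution (R : rcfType) (l : nat) (D V : int -> 'M[R]_l)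
  (z : R[i]) (u : nat -> 'M[R[i]]_l) : Prop :=
  forall n : nat, (1 <= n)%N ->
    cmx (D (n.-1)%:Z) *m u n.-1 + cmx (D n%:Z) *m u n.+1 + cmx (V n%:Z) *m u n
    = z *: u n.

Definition is_dirichlet (R : rcfType) (l : nat) (D V : int -> 'M[R]_l)
  (z : R[i]) (phi : nat -> 'M[R[i]]_l) : Prop :=
  [/\ is_mx_solution D V z phi, phi 0%N = 0 & phi 1%N = 1%:M].

Definition is_neumann (R : rcfType) (l : nat) (D V : int -> 'M[R]_l)
  (z : R[i]) (psi : nat -> 'M[R[i]]_l) : Prop :=
  [/\ is_mx_solution D V z psi, psi 0%N = 1%:M & psi 1%N = 0].

Definition is_jost (R : rcfType) (l : nat) (D V : int -> 'M[R]_l)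
  (z : R[i]) (F : nat -> 'M[R[i]]_l) : Prop :=
  [/\ is_mx_solution D V z F, F 0%N = 1%:M &
      exists B : R, forall N : nat, \sum_(n < N) frob2 (F n) <= B].

Definition weylM (R : rcfType) (l : nat) (D : int -> 'M[R]_l)
  (F : nat -> 'M[R[i]]_l) : 'M[R[i]]_l :=
  - (F 1%N *m invmx (cmx (D 0))).

(* Main.v *)
Require Import Defs.
From mathcomp Require Import all_boot all_order all_algebra.
From mathcomp Require Import complex.
Import Order.TTheory GRing.Theory Num.Theory.
Local Open Scope ring_scope.
Set Implicit Arguments. Unset Strict Implicit.
Definition Lop (K : fieldType) l (Dc Vc : nat -> 'M[K]_l) (u : nat -> 'M[K]_l) n :=
  Dc n.-1 *m u n.-1 + Dc n *m u n.+1 + Vc n *m u n.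

Lemma next_sol (K : fieldType) l (Dc Vc : nat -> 'M[K]_l) (x : K) u n :
  Dc n \in unitmx -> Lop Dc Vc u n = x *: u n ->
  u n.+1 = invmx (Dc n) *m ((x%:M - Vc n) *m u n - Dc n.-1 *m u n.-1).
Proof.
move=> Hu; rewrite /Lop => H.
have -> : (x%:M - Vc n) *m u n - Dc n.-1 *m u n.-1 = Dc n *m u n.+1.
  rewrite mulmxBl mul_scalar_mx -H; rewrite -[Dc n.-1 *m _ + _]addrC. 
  by rewrite addrK addrK.
by rewrite mulmxA mulVmx // mul1mx.
Qed.

Lemma sub4 (M : zmodType) (a b c d : M) : a - b - (c - d) = a - c - (b - d).
Proof. by rewrite !opprB !addrA -[a - b + d]addrAC -[a - c + d]addrAC addrAC. Qed.

Lemma s2 (M : zmodType) (a b c d : M) : a - b + (- c - - d) = a - c - (b - d).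
Proof. by rewrite opprK opprB addrACA [d - b]addrC. Qed.

Definition Alt (K : fieldType) l (A : 'M[K]_l) (u1 v1 u2 v2 : 'M[K]_l) :=
  u1 *m A *m v2^T - v1 *m A *m u2^T.

Lemma AltL (K : fieldType) l (A X Y u1 v1 u1' v1' u2 v2 : 'M[K]_l) :
  Alt A (X *m u1 - Y *m u1') (X *m v1 - Y *m v1') u2 v2
  = X *m Alt A u1 v1 u2 v2 - Y *m Alt A u1' v1' u2 v2.
Proof. by rewrite /Alt !mulmxBl !mulmxBr !mulmxA sub4. Qed.

Lemma AltLs (K : fieldType) l (A X u1 v1 u2 v2 : 'M[K]_l) :
  Alt A (X *m u1) (X *m v1) u2 v2 = X *m Alt A u1 v1 u2 v2.
Proof. by rewrite /Alt !mulmxBr !mulmxA. Qed.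

Lemma AltR (K : fieldType) l (A X Y u1 v1 u2 v2 u2' v2' : 'M[K]_l) :
  Alt A u1 v1 (X *m u2 - Y *m u2') (X *m v2 - Y *m v2')
  = Alt A u1 v1 u2 v2 *m X^T - Alt A u1 v1 u2' v2' *m Y^T.
Proof. by rewrite /Alt !linearB /= !trmx_mul !mulmxBl !mulmxA s2. Qed.

Lemma AltRs (K : fieldType) l (A X u1 v1 u2 v2 : 'M[K]_l) :
  Alt A u1 v1 (X *m u2) (X *m v2) = Alt A u1 v1 u2 v2 *m X^T.
Proof. by rewrite /Alt !trmx_mul !mulmxBl !mulmxA. Qed.

Lemma AltT (K : fieldType) l (A u1 v1 u2 v2 : 'M[K]_l) : A^T = A ->
  (Alt A u1 v1 u2 v2)^T = - Alt A u2 v2 u1 v1.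
Proof.
move=> HA; rewrite /Alt linearB /= !trmx_mul !trmxK HA !mulmxA opprB.
done.
Qed.

Lemma wronsk (K : fieldType) l (Dc Vc : nat -> 'M[K]_l) (x : K) (phi psi : nat -> 'M[K]_l) :
  (forall n, (Dc n)^T = Dc n) -> (forall n, (Vc n)^T = Vc n) ->
  (forall n, Dc n \in unitmx) ->
  (forall n, (0 < n)%N -> Lop Dc Vc phi n = x *: phi n) ->
  (forall n, (0 < n)%N -> Lop Dc Vc psi n = x *: psi n) ->
  phi 0%N = 0 -> phi 1%N = 1%:M -> psi 0%N = 1%:M -> psi 1%N = 0 ->
  forall n, [/\ Alt (invmx (Dc 0%N)) (psi n) (phi n) (psi n) (phi n) = 0,
    Alt (invmx (Dc 0%N)) (psi n) (phi n) (psi n.+1) (phi n.+1) = invmx (Dc n) &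
    Alt (invmx (Dc 0%N)) (psi n.+1) (phi n.+1) (psi n.+1) (phi n.+1) = 0].
Proof.
move=> Hs HV Hu Hphi Hpsi p0 p1 q0 q1.
set A := invmx (Dc 0%N).
have HA : A^T = A by rewrite /A trmx_inv Hs.
have trW : forall m, (x%:M - Vc m)^T = x%:M - Vc m.
  by move=> m; rewrite linearB /= tr_scalar_mx HV.
elim=> [|n [Pa Qa Pb]].
  rewrite /Alt p0 p1 q0 q1 !trmx0 !trmx1 !mulmx0 !mul0mx !mulmx1 ?subr0 ?sub0r ?oppr0.

  by rewrite /A mul1mx.
have Ec : forall u, (forall n, (0 < n)%N -> Lop Dc Vc u n = x *: u n) ->
   u n.+2 = invmx (Dc n.+1) *m ((x%:M - Vc n.+1) *m u n.+1 - Dc n *m u n).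
  by move=> u Hu'; apply: (next_sol (Hu _)); apply: Hu'.
have Qb : Alt A (psi n.+1) (phi n.+1) (psi n.+2) (phi n.+2) = invmx (Dc n.+1).
  have Hba : Alt A (psi n.+1) (phi n.+1) (psi n) (phi n) = - invmx (Dc n).
    by rewrite -[LHS]opprK -AltT // Qa trmx_inv Hs.
  rewrite (Ec _ Hpsi) (Ec _ Hphi) AltRs AltR Pb Hba mul0mx sub0r !mulNmx opprK.
  by rewrite trmx_inv !Hs mulVmx // mul1mx.
split => //.
have Hac : Alt A (psi n) (phi n) (psi n.+2) (phi n.+2)
   = invmx (Dc n) *m (x%:M - Vc n.+1) *m invmx (Dc n.+1).
  by rewrite (Ec _ Hpsi) (Ec _ Hphi) AltRs AltR Qa Pa mul0mx subr0 trmx_inv Hs trW.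
rewrite {1}(Ec _ Hpsi) {1}(Ec _ Hphi) AltLs AltL Qb Hac.
by rewrite !mulmxA mulmxV // mul1mx subrr mulmx0.
Qed.
Lemma z5 (M : zmodType) (a a' b b' c : M) : a' + b' + c = a + b + c + (b' - b) + (a' - a).
Proof. by rewrite [RHS]addrC -!addrA addKr [b + _]addrCA subrKC [c + _]addrC. Qed.
Lemma z6 (M : zmodType) (p q a1 a2 c1 c2 : M) :
  p + a1 - c1 - (q + a2 - c2) = p - q - (a2 - a1) + (c2 - c1).
Proof. rewrite !opprD !opprK -!addrA. rewrite (addrCA (-a2) a1) (addrCA (-q) a1); congr (_ + _).
by rewrite (addrC c2) (addrCA (-a2) (-c1)) (addrCA (-q) (-c1)). Qed.

Lemma Lop_mul (K : fieldType) l (Dc Vc : nat -> 'M[K]_l) u s n :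
  Lop Dc Vc (fun k => u k *m s k) n = Lop Dc Vc u n *m s n
   + Dc n *m u n.+1 *m (s n.+1 - s n) + Dc n.-1 *m u n.-1 *m (s n.-1 - s n).
Proof. by rewrite /Lop !mulmxBr !mulmxDl !mulmxA (z5 (Dc n.-1 *m u n.-1 *m s n) _ (Dc n *m u n.+1 *m s n)). Qed.

Lemma z7 (M : zmodType) (a a' b b' c c' : M) :
  (a - a') + (b - b') + (c - c') = a + b + c - (a' + b' + c').
Proof. by rewrite (addrACA a (-a')) (addrACA (a + b)) !opprD. Qed.

Lemma LopB (K : fieldType) l (Dc Vc : nat -> 'M[K]_l) u v n :
  Lop Dc Vc (fun k => u k - v k) n = Lop Dc Vc u n - Lop Dc Vc v n.
Proof. by rewrite /Lop !mulmxBr z7. Qed.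

Lemma LopD (K : fieldType) l (Dc Vc : nat -> 'M[K]_l) u v n :
  Lop Dc Vc (fun k => u k + v k) n = Lop Dc Vc u n + Lop Dc Vc v n.
Proof. by rewrite /Lop !mulmxDr (addrACA (Dc n.-1 *m u n.-1)) (addrACA (Dc n.-1 *m u n.-1 + Dc n *m u n.+1)). Qed.

Lemma LopZ (K : fieldType) l (Dc Vc : nat -> 'M[K]_l) (c : K) u n :
  Lop Dc Vc (fun k => c *: u k) n = c *: Lop Dc Vc u n.
Proof. by rewrite /Lop !scalerDr -!scalemxAr. Qed.

Lemma Lopr (K : fieldType) l (Dc Vc : nat -> 'M[K]_l) u (M : 'M[K]_l) n :
  Lop Dc Vc (fun k => u k *m M) n = Lop Dc Vc u n *m M.
Proof. by rewrite /Lop !mulmxDl !mulmxA. Qed.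

Definition Ssum (K : fieldType) l (A : 'M[K]_l) (u F : nat -> 'M[K]_l) n :=
  \sum_(1 <= k < n.+1) A *m (u k)^T *m F k.

Lemma Ssum_diff (K : fieldType) l (A : 'M[K]_l) u F n :
  Ssum A u F n.+1 - Ssum A u F n = A *m (u n.+1)^T *m F n.+1.
Proof. by rewrite /Ssum big_nat_recr //= addrAC subrr add0r. Qed.

Lemma Ssum_diffN (K : fieldType) l (A : 'M[K]_l) u F n :
  Ssum A u F n - Ssum A u F n.+1 = - (A *m (u n.+1)^T *m F n.+1).
Proof. by rewrite -opprB Ssum_diff. Qed.

Lemma Gsol (K : fieldType) l (Dc Vc : nat -> 'M[K]_l) (x : K) (phi psi F : nat -> 'M[K]_l) :
  (forall n, (Dc n)^T = Dc n) -> (forall n, (Vc n)^T = Vc n) ->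
  (forall n, Dc n \in unitmx) ->
  (forall n, (0 < n)%N -> Lop Dc Vc phi n = x *: phi n) ->
  (forall n, (0 < n)%N -> Lop Dc Vc psi n = x *: psi n) ->
  phi 0%N = 0 -> phi 1%N = 1%:M -> psi 0%N = 1%:M -> psi 1%N = 0 ->
  forall n, (0 < n)%N ->
  Lop Dc Vc (fun k => phi k *m Ssum (invmx (Dc 0%N)) psi F k
                      - psi k *m Ssum (invmx (Dc 0%N)) phi F k) n
  = x *: (phi n *m Ssum (invmx (Dc 0%N)) psi F n - psi n *m Ssum (invmx (Dc 0%N)) phi F n)
    + F n.
Proof.
move=> Hs HV Hu Hphi Hpsi p0 p1 q0 q1 [//|m] _.
have W := wronsk Hs HV Hu Hphi Hpsi p0 p1 q0 q1.
have [_ Qm _] := W m.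
have [_ _ Pm2] := W m.+1.
set A := invmx (Dc 0%N).
rewrite LopB !Lop_mul Hphi // Hpsi //= !Ssum_diff !Ssum_diffN.
transitivity (x *: (phi m.+1 *m Ssum A psi F m.+1 - psi m.+1 *m Ssum A phi F m.+1)
   - Dc m.+1 *m Alt A (psi m.+2) (phi m.+2) (psi m.+2) (phi m.+2) *m F m.+2
   + Dc m *m Alt A (psi m) (phi m) (psi m.+1) (phi m.+1) *m F m.+1).
  rewrite /Alt !mulmxN !mulmxBr !mulmxBl !mulmxA scalerBr !scalemxAl.
  exact: z6.
by rewrite Pm2 Qm mulmx0 mul0mx subr0 mulmxV // mul1mx.
Qed.

Lemma z9 (M : zmodType) (a b p q r : M) : a + b - (p + q + (r + b)) = a - (p + q + r).
Proof. by rewrite addrA opprD addrACA subrr addr0. Qed.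

Lemma main_abs (K : fieldType) l (Dc Vc : nat -> 'M[K]_l) (x c : K) (phi psi F : nat -> 'M[K]_l) :
  (forall n, (Dc n)^T = Dc n) -> (forall n, (Vc n)^T = Vc n) ->
  (forall n, Dc n \in unitmx) ->
  (forall n, (0 < n)%N -> Lop Dc Vc phi n = x *: phi n) ->
  (forall n, (0 < n)%N -> Lop Dc Vc psi n = x *: psi n) ->
  phi 0%N = 0 -> phi 1%N = 1%:M -> psi 0%N = 1%:M -> psi 1%N = 0 ->
  (forall n, (0 < n)%N -> Lop Dc Vc F n = (x + c) *: F n) -> F 0%N = 1%:M ->
  forall n, F n = psi n + phi n *m F 1%N
     + c *: (phi n *m Ssum (invmx (Dc 0%N)) psi F n - psi n *m Ssum (invmx (Dc 0%N)) phi F n).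
Proof.
move=> Hs HV Hu Hphi Hpsi p0 p1 q0 q1 HF F0.
set A := invmx (Dc 0%N).
pose H := fun k => F k - (psi k + phi k *m F 1%N
     + c *: (phi k *m Ssum A psi F k - psi k *m Ssum A phi F k)).
have LH : forall n, (0 < n)%N -> Lop Dc Vc H n = x *: H n.
  move=> n n0; rewrite /H LopB LopD LopD Lopr LopZ.
  rewrite (Gsol F Hs HV Hu Hphi Hpsi p0 p1 q0 q1) // HF // Hphi // Hpsi //.
  set g := (phi n *m Ssum _ psi F n - psi n *m Ssum _ phi F n).
  rewrite [in RHS]scalerBr [in RHS]scalerDr [in RHS]scalerDr scalerDl (scalerDr c).
  rewrite -scalemxAl scalerA [c * x]mulrC -scalerA.
  exact: z9.
have H0 : H 0%N = 0.
  by rewrite /H /Ssum !big_geq // F0 p0 q0 !mul0mx mulmx0 subr0 scaler0 !addr0 subrr.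
have H1 : H 1%N = 0.
  by rewrite /H /Ssum big_nat1 q1 p1 trmx0 mulmx0 !mul0mx mulmx0 subr0 scaler0 addr0 add0r mul1mx subrr.
have HH : forall n, H n = 0 /\ H n.+1 = 0.
  elim=> [|n [IH1 IH2]]; first by [].
  split => //.
  rewrite (next_sol (Hu _) (LH _ _)) //= IH1 IH2 !mulmx0 subrr mulmx0 //.
move=> n; apply/eqP; rewrite -subr_eq0; apply/eqP.
by have [] := HH n.
Qed.

Lemma cmxT (R : rcfType) l (A : 'M[R]_l) : (cmx A)^T = cmx A^T.
Proof. by rewrite /cmx map_trmx. Qed.

Lemma cmx_unit (R : rcfType) l (A : 'M[R]_l) : A \in unitmx -> cmx A \in unitmx.
Proof.
have -> : cmx A = map_mx (real_complex R) A by [].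
by rewrite map_unitmx.
Qed.

Theorem mainTheorem4 (R : rcfType) (l : nat) (D V : int -> 'M[R]_l)
  (HDsym : forall n, (D n)^T = D n) (HVsym : forall n, (V n)^T = V n)
  (HDinv : forall n, D n \in unitmx)
  (HDbd : exists B : R, forall n : int, \sum_(i < l) \sum_(j < l) (D n i j) ^+ 2 <= B)
  (x y : R) (hy : 0 < y)
  (F phi psi : nat -> 'M[R[i]]_l)
  (HF : is_jost D V (x +i* y)%C F)
  (Hphi : is_dirichlet D V (x%:C)%C phi)
  (Hpsi : is_neumann D V (x%:C)%C psi) :
  F 0%N = 1%:M /\
  forall n : nat, (1 <= n)%N ->
    F n = psi n - phi n *m weylM D F *m cmx (D 0) 
          - (0 +i* y)%C *: (psi n *m \sum_(1 <= k < n.+1)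
                                 invmx (cmx (D 0)) *m (phi k)^T *m F k)
          + (0 +i* y)%C *: (phi n *m \sum_(1 <= k < n.+1)
                                 invmx (cmx (D 0)) *m (psi k)^T *m F k).
Proof.
case: HF => [HFs F0 _]; case: Hphi => [Hphs p0 p1]; case: Hpsi => [Hpss q0 q1].
split => // n _.
pose Dc := fun k : nat => cmx (D k%:Z).
pose Vc := fun k : nat => cmx (V k%:Z).
have Hs : forall k, (Dc k)^T = Dc k by move=> k; rewrite /Dc cmxT HDsym.
have HV : forall k, (Vc k)^T = Vc k by move=> k; rewrite /Vc cmxT HVsym.
have Hu : forall k, Dc k \in unitmx by move=> k; apply: cmx_unit.
have Hph : forall k, (0 < k)%N -> Lop Dc Vc phi k = (x%:C)%C *: phi k.
  by move=> k hk; apply: Hphs.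
have Hps : forall k, (0 < k)%N -> Lop Dc Vc psi k = (x%:C)%C *: psi k.
  by move=> k hk; apply: Hpss.
have HFF : forall k, (0 < k)%N -> Lop Dc Vc F k = ((x%:C)%C + (0 +i* y)%C) *: F k.
  move=> k hk; have -> : ((x%:C)%C + (0 +i* y)%C) = (x +i* y)%C.
    by apply/eqP; rewrite eq_complex /= addr0 add0r !eqxx.
  by apply: HFs.
rewrite [LHS](main_abs Hs HV Hu Hph Hps p0 p1 q0 q1 HFF F0 n).
have e : Dc 0%N = cmx (D 0) by [].
rewrite /Ssum e /weylM.
rewrite mulmxN mulNmx opprK -(mulmxA (phi n)) -(mulmxA (F 1%N)) (mulVmx (cmx_unit (HDinv 0))) mulmx1.
by rewrite scalerBr (addrC (_ *: _) (- _)) addrA.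
Qed.
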